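(* Let $S=\{s_1<\dots<s_{k_1}\}$ and $T=\{t_1<\dots<t_{k_2}\}$ be nonempty subsets of $\{1,\dots,n-1\}$ with $\max S+\min T\le n$ and $\min S+\max T\le n$, let $A=T_n\langle S;T\rangle$, $d=\gcd\{s+t: s\in S,t\in T\}$ and $d'=\gcd(d,s_1)$. Suppose that for each $1\le i\le d$ the principal submatrix of the Boolean product $AA^T$ with rows and columns indexed by $\{v\in[n]: v\equiv i\pmod d\}$ is irreducible. Then the competition index of $A$ is at most $$2\big(\lceil n/d\rceil-1\big)\Big(\max\Big\{\Big\lceil\tfrac{t_{k_2}}{s_1}\Big\rceil,\Big\lceil\tfrac{s_{k_1}}{t_1}\Big\rceil\Big\}+1\Big)+2(s_1+t_1).$$
   Context: Boolean arithmetic on $\{0,1\}$: $1+1=1$. $T_n\langle S;T\rangle$ is the $n\times n$ $(0,1)$-matrix whose $(i,j)$-entry is $1$ iff $j-i\in S$ or $i-j\in T$. The competition index of $A$ is the smallest positive integer $q$ such that $A^{q+i}(A^T)^{q+i}=A^{q+r+i}(A^T)^{q+r+i}$ for some $r\ge1$ and all $i\ge0$. *)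

(* Defs.v *)
(* Boolean (0,1)-matrices of order n are functions
   'I_n -> 'I_n -> bool; index u : 'I_n stands for the paper's row/column u+1. *)
From mathcomp Require Import all_boot.
Set Implicit Arguments. Unset Strict Implicit. Unset Printing Implicit Defensive.

Definition bmat (n : nat) := 'I_n -> 'I_n -> bool.

Definition bmul n (A B : bmat n) : bmat n :=
  fun i j => [exists k, A i k && B k j].
Definition btr n (A : bmat n) : bmat n := fun i j => A j i.
Definition bid n : bmat n := fun i j => i == j.
Definition bpow n (A : bmat n) (k : nat) : bmat n := iter k (bmul A) (@bid n).

Definition Tmat n (S T : {set 'I_n}) : bmat n :=
  fun i j => [exists s in S, (j : nat) == i + s] || [exists t in T, (i : nat) == j + t].

Definition compmat n (A : bmat n) (k : nat) : bmat n :=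
  bmul (bpow A k) (bpow (btr A) k).

(* q satisfies the defining property of the competition index:
   exists r >= 1 with A^{q+i}(A^T)^{q+i} = A^{q+r+i}(A^T)^{q+r+i} for all i >= 0. *)
Definition comp_prop n (A : bmat n) (q : nat) : Prop :=
  exists2 r, 0 < r & forall i u v, compmat A (q + i) u v = compmat A (q + r + i) u v.

Definition principal_irreducible n (M : bmat n) (W : {set 'I_n}) : Prop :=
  forall u v, u \in W -> v \in W ->
    connect (fun x y => [&& x \in W, y \in W & M x y]) u v.

Definition ceil_div (a b : nat) : nat := (a + b.-1) %/ b.

(* Main.v *)
Require Import Defs.
From mathcomp Require Import all_boot.
From mathcomp Require Import zify.
Set Implicit Arguments. Unset Strict Implicit. Unset Printing Implicit Defensive.


Lemma bpowS n (A : bmat n) k x y : bpow A k.+1 x y = [exists z, A x z && bpow A k z y].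
Proof. by []. Qed.

Lemma bpow0 n (A : bmat n) x y : bpow A 0 x y = (x == y).
Proof. by []. Qed.

Section Gen.
Variable n : nat.
Variable A : bmat n.

Lemma reach_add j k x z y : bpow A j x z -> bpow A k z y -> bpow A (j + k) x y.
Proof.
elim: j x => [|j IH] x.
  by rewrite bpow0 => /eqP ->.
rewrite bpowS => /existsP [w /andP [Axw Hw]] Hk.
rewrite addSn bpowS; apply/existsP; exists w; rewrite Axw /=.
exact: IH Hw Hk.
Qed.

Lemma reach_last k x z y : bpow A k x z -> A z y -> bpow A k.+1 x y.
Proof.
move=> H1 H2; rewrite -addn1; apply: reach_add H1 _.
by rewrite bpowS; apply/existsP; exists y; rewrite H2 bpow0 eqxx.
Qed.

Lemma bpowSr k x y : bpow A k.+1 x y -> exists2 z, bpow A k x z & A z y.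
Proof.
elim: k x => [|k IH] x.
  rewrite bpowS => /existsP [z /andP [Axz]]; rewrite bpow0 => /eqP <-.
  by exists x; rewrite ?bpow0.
rewrite bpowS => /existsP [z /andP [Axz Hz]].
case: (IH _ Hz) => w Hw Awy; exists w => //.
by rewrite bpowS; apply/existsP; exists z; rewrite Axz.
Qed.

Lemma bpow_tr k x y : bpow (btr A) k x y = bpow A k y x.
Proof.
elim: k x y => [|k IH] x y; first by rewrite !bpow0 eq_sym.
apply/idP/idP.
  rewrite bpowS => /existsP [z /andP [Az Hz]].
  rewrite IH in Hz; exact: reach_last Hz Az.
case/bpowSr => z Hz Az; rewrite bpowS; apply/existsP; exists z.
by rewrite /btr Az IH.
Qed.

Definition Meet k (u v : 'I_n) := exists w, bpow A k u w && bpow A k v w.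

Lemma compmatP k u v : compmat A k u v <-> Meet k u v.
Proof.
rewrite /compmat /bmul; split.
  by case/existsP => w /andP [H1 H2]; exists w; rewrite H1 -bpow_tr.
by case => w /andP [H1 H2]; apply/existsP; exists w; rewrite H1 bpow_tr.
Qed.

Lemma Meet_sym k u v : Meet k u v -> Meet k v u.
Proof. by case=> w /andP [H1 H2]; exists w; rewrite H1 H2. Qed.

Lemma Meet_pre j k u v u' v' :
  bpow A j u u' -> bpow A j v v' -> Meet k u' v' -> Meet (j + k) u v.
Proof.
move=> H1 H2 [w /andP [H3 H4]]; exists w.
by rewrite (reach_add H1 H3) (reach_add H2 H4).
Qed.

Hypothesis outnb : forall x, exists y, A x y.

Lemma Meet_mono k k' u v : k <= k' -> Meet k u v -> Meet k' u v.
Proof.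
move=> /subnKC <- H; elim: (k' - k) => [|m IH]; first by rewrite addn0.
case: IH => w /andP [H1 H2]; case: (outnb w) => y Ay.
by exists y; rewrite addnS (reach_last H1 Ay) (reach_last H2 Ay).
Qed.

End Gen.


Lemma ceil_divP s b : 0 < b -> s <= ceil_div s b * b.
Proof.
move=> b0; rewrite /ceil_div.
have := ltn_ceil (s + b.-1) b0.
rewrite mulSn; set q := (_ %/ _ * _). move=> H.
lia.
Qed.

Section Toep.
Variable n : nat.
Variables S T : {set 'I_n}.
Variables a1 b1 : 'I_n.
Variables R d : nat.
Hypothesis ha1 : a1 \in S.
Hypothesis hb1 : b1 \in T.
Hypothesis hpa : 0 < a1.
Hypothesis hpb : 0 < b1.
Hypothesis hSb : forall s : 'I_n, s \in S -> s + b1 <= n.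
Hypothesis hTa : forall t : 'I_n, t \in T -> a1 + t <= n.
Hypothesis hRS : forall s : 'I_n, s \in S -> ceil_div s b1 <= R.
Hypothesis hRT : forall t : 'I_n, t \in T -> ceil_div t a1 <= R.

Local Notation A := (Tmat S T).
Local Notation p0 := (a1 + b1).

Lemma up_edge (x y : 'I_n) (s : 'I_n) : s \in S -> y = x + s :> nat -> A x y.
Proof.
by move=> hs e; rewrite /Tmat; apply/orP; left; apply/existsP; exists s; rewrite hs e eqxx.
Qed.

Lemma dn_edge (x y : 'I_n) (t : 'I_n) : t \in T -> x = y + t :> nat -> A x y.
Proof.
by move=> ht e; rewrite /Tmat; apply/orP; right; apply/existsP; exists t; rewrite ht e eqxx.
Qed.

Lemma A_cases x y : A x y ->
  (exists2 s : 'I_n, s \in S & y = x + s :> nat) \/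
  (exists2 t : 'I_n, t \in T & x = y + t :> nat).
Proof.
rewrite /Tmat => /orP [/existsP [s /andP [hs /eqP e]]|/existsP [t /andP [ht /eqP e]]].
  by left; exists s.
by right; exists t.
Qed.

Lemma ladder_step (x : 'I_n) : exists y : 'I_n, A x y /\ y + b1 = x %[mod p0].
Proof.
case: (ltnP (x + a1) n) => h.
  exists (Ordinal h); split; first exact: (up_edge (s := a1)).
  by rewrite /= -addnA modnDr.
have hb := hTa hb1.
have hlt : x - b1 < n by have := ltn_ord x; lia.
exists (Ordinal hlt); split.
  apply: (dn_edge (t := b1)) => //=; lia.
rewrite /=; congr (_ %% _); lia.
Qed.

Lemma outnb (x : 'I_n) : exists y, A x y.
Proof. by case: (ladder_step x) => y [] ? _; exists y. Qed.

Lemma ladder j (x : 'I_n) : exists y, bpow A j x y /\ y + j * b1 = x %[mod p0].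
Proof.
elim: j x => [|j IH] x.
  by exists x; rewrite bpow0 eqxx mul0n addn0.
case: (ladder_step x) => z [Az ez]; case: (IH z) => y [Hy ey].
exists y; split.
  by rewrite bpowS; apply/existsP; exists z; rewrite Az.
have -> : y + j.+1 * b1 = (y + j * b1) + b1 by rewrite mulSn; lia.
by rewrite -modnDml ey modnDml.
Qed.

Lemma desc (s : 'I_n) : s \in S -> forall m (x : 'I_n), x + s < n + m * b1 ->
  exists j (y : 'I_n), [/\ j <= m, bpow A j x y, x = y + j * b1 :> nat & y + s < n].
Proof.
move=> hs m; elim: m => [|m IH] x hx.
  by exists 0, x; rewrite bpow0 eqxx mul0n addn0; split => //; rewrite addn0 in hx.
case: (ltnP (x + s) n) => h.
  by exists 0, x; rewrite bpow0 eqxx mul0n addn0; split.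
have hb := hSb hs.
have hlt : x - b1 < n by have := ltn_ord x; lia.
have hx' : (Ordinal hlt) + s < n + m * b1 by rewrite /=; move: hx; rewrite mulSn; lia.
case: (IH _ hx') => j [y [hj Hy ey hy]].
exists j.+1, y; split => //.
  rewrite bpowS; apply/existsP; exists (Ordinal hlt); rewrite Hy andbT.
  apply: (dn_edge (t := b1)) => //=; lia.
rewrite mulSn; move: ey => /= ey; lia.
Qed.

Lemma asc (t : 'I_n) : t \in T -> forall m (x : 'I_n), t <= x + m * a1 ->
  exists j (y : 'I_n), [/\ j <= m, bpow A j x y, y = x + j * a1 :> nat & t <= y].
Proof.
move=> ht m; elim: m => [|m IH] x hx.
  by exists 0, x; rewrite bpow0 eqxx mul0n addn0; split => //; rewrite addn0 in hx.
case: (leqP t x) => h.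
  by exists 0, x; rewrite bpow0 eqxx mul0n addn0; split.
have hb := hTa ht.
have hlt : x + a1 < n by lia.
have hx' : t <= (Ordinal hlt) + m * a1 by rewrite /=; move: hx; rewrite mulSn; lia.
case: (IH _ hx') => j [y [hj Hy ey hy]].
exists j.+1, y; split => //.
  rewrite bpowS; apply/existsP; exists (Ordinal hlt); rewrite Hy andbT.
  exact: (up_edge (s := a1)).
rewrite mulSn; move: ey => /= ey; lia.
Qed.

Lemma moveUp (s : 'I_n) : s \in S -> forall x y : 'I_n,
  exists j (x' y' : 'I_n), [/\ j <= R, bpow A j.+1 x x', bpow A j.+1 y y',
     x' + j.+1 * b1 = x + (s + b1) :> nat & y' + j.+1 * b1 = y %[mod p0]].
Proof.
move=> hs x y.
have hx : x + s < n + ceil_div s b1 * b1.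
  have := ceil_divP s hpb; have := ltn_ord x; lia.
case: (desc hs hx) => j [z [hj Hz ez hz]].
exists j, (Ordinal hz); case: (ladder j.+1 y) => y' [Hy' ey'].
exists y'; split => //.
- exact: leq_trans hj (hRS hs).
- apply: reach_last Hz _; exact: (up_edge (s := s)).
- rewrite /= mulSn ez; lia.
Qed.

Lemma moveDn (t : 'I_n) : t \in T -> forall x y : 'I_n,
  exists j (x' y' : 'I_n), [/\ j <= R, bpow A j.+1 x x', bpow A j.+1 y y',
     x' + j.+1 * b1 + (t + a1) = x %[mod p0] & y' + j.+1 * b1 = y %[mod p0]].
Proof.
move=> ht x y.
have hx : t <= x + ceil_div t a1 * a1.
  have := ceil_divP t hpa; lia.
case: (asc ht hx) => j [z [hj Hz ez hz]].
have hlt : z - t < n by have := ltn_ord z; lia.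
exists j, (Ordinal hlt); case: (ladder j.+1 y) => y' [Hy' ey'].
exists y'; split => //.
- exact: leq_trans hj (hRT ht).
- apply: reach_last Hz _; apply: (dn_edge (t := t)) => //=; lia.
- have -> : Ordinal hlt + j.+1 * b1 + (t + a1) = x + j.+1 * p0 :> nat.
    by rewrite /= mulSn mulnDr; move: ez; lia.
  by rewrite [x + _]addnC modnMDl.
Qed.

Lemma final g (u v : 'I_n) : u = v + g * p0 :> nat -> Meet A g u v.
Proof.
elim: g u v => [|g IH] u v e.
  by exists u; rewrite !bpow0 eqxx /=; apply/eqP/val_inj; rewrite /= e mul0n addn0.
have hu : u - b1 < n by have := ltn_ord u; lia.
have hv : v + a1 < n by have := ltn_ord u; move: e; rewrite mulSn; lia.
have e' : Ordinal hu = Ordinal hv + g * p0 :> nat by rewrite /=; move: e; rewrite mulSn; lia.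
case: (IH _ _ e') => w /andP [H1 H2]; exists w; rewrite !bpowS; apply/andP; split.
  apply/existsP; exists (Ordinal hu); rewrite H1 andbT.
  apply: (dn_edge (t := b1)) => //=; move: e; rewrite mulSn; lia.
apply/existsP; exists (Ordinal hv); rewrite H2 andbT.
exact: (up_edge (s := a1)).
Qed.


Lemma hbnd N Q j k c : j <= Q -> k <= N * Q.+1 + c -> j.+1 + k <= N.+1 * Q.+1 + c.
Proof. rewrite mulSn; move: (N * Q.+1) => X; lia. Qed.

Lemma hA1 a b c e f : a + c = e + f -> a + b + c = e + (b + f).
Proof. lia. Qed.

Lemma hA2 a b c : a + (b + c) = a + c + b.
Proof. lia. Qed.

Lemma hA3 a b c e : a + b + (c + e) = a + c + (b + e).
Proof. lia. Qed.

Lemma subn_pred (u v m : nat) : u < m -> u - v <= m.-1.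
Proof. lia. Qed.

Lemma cD m a b c e : a = b %[mod m] -> c = e %[mod m] -> a + c = b + e %[mod m].
Proof. by move=> h1 h2; rewrite -modnDm h1 h2 modnDm. Qed.

Lemma cC m a b c : a + c = b + c %[mod m] -> a = b %[mod m].
Proof. by move/eqP; rewrite eqn_modDr => /eqP. Qed.

Definition mv (r : nat) (r' : 'I_p0) : bool :=
  [exists s in S, ((r' : nat) == (r + (s + b1)) %% p0) || ((r' + (s + b1)) %% p0 == r %% p0)] ||
  [exists t in T, ((r' : nat) == (r + (t + a1)) %% p0) || ((r' + (t + a1)) %% p0 == r %% p0)].

Fixpoint Xp (N : nat) (r : nat) : bool :=
  if N is N'.+1 then Xp N' r || [exists r' : 'I_p0, Xp N' r' && mv r r'] else r %% p0 == 0.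

Lemma mv_mod r r' : mv (r %% p0) r' = mv r r'.
Proof. by rewrite /mv; congr (_ || _); apply: eq_existsb => x; rewrite modnDml modn_mod. Qed.

Lemma Xp_mod N r : Xp N (r %% p0) = Xp N r.
Proof.
elim: N => [|N IH] /=; first by rewrite modn_mod.
by rewrite IH; congr (_ || _); apply: eq_existsb => r'; rewrite mv_mod.
Qed.

Lemma Xp_grow N x : Xp N x -> Xp N.+1 x.
Proof. by move=> h /=; rewrite h. Qed.

Lemma Xp_le N M x : N <= M -> Xp N x -> Xp M x.
Proof.
move=> /subnKC <- h; elim: (M - N) => [|k IH]; first by rewrite addn0.
by rewrite addnS; apply: Xp_grow.
Qed.

Lemma game N r : Xp N r -> forall u v : 'I_n, u = v + r %[mod p0] ->
  exists2 k, k <= N * R.+1 + n.-1 %/ p0 & Meet A k u v.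
Proof.
elim: N r => [|N IH] r.
  move=> /= /eqP hr u v huv.
  have huv' : u = v %[mod p0] by rewrite huv -modnDmr hr addn0.
  have hn := ltn_ord u; have hn' := ltn_ord v.
  case: (leqP v u) => hvu.
    have e1 : (u - v) %% p0 = 0.
      have : v + (u - v) = v + 0 %[mod p0] by rewrite addn0 subnKC.
      by move/eqP; rewrite eqn_modDl mod0n => /eqP.
    exists ((u - v) %/ p0).
      by rewrite mul0n add0n; apply: leq_div2r; apply: subn_pred.
    apply: final; have e2 := divn_eq (u - v) p0; rewrite e1 addn0 in e2.
    by rewrite -e2 subnKC.
  have e1 : (v - u) %% p0 = 0.
    have : u + (v - u) = u + 0 %[mod p0] by rewrite addn0 subnKC // ltnW.
    by move/eqP; rewrite eqn_modDl mod0n => /eqP.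
  exists ((v - u) %/ p0).
    by rewrite mul0n add0n; apply: leq_div2r; apply: subn_pred.
  apply: Meet_sym; apply: final; have e2 := divn_eq (v - u) p0; rewrite e1 addn0 in e2.
  by rewrite -e2 subnKC // ltnW.
move=> /= /orP [hr|/existsP [r' /andP [hr' hmv]]] u v huv.
  case: (IH r hr u v huv) => k hk Hk; exists k => //.
  apply: leq_trans hk _; rewrite leq_add2r; apply: leq_mul => //.
have IH' := IH r' hr'.
have Hbound : forall j k, j <= R -> k <= N * R.+1 + n.-1 %/ p0 ->
    j.+1 + k <= N.+1 * R.+1 + n.-1 %/ p0.
  by move=> j k hj hk; apply: hbnd.
case/orP: hmv => [/existsP [s /andP [hs /orP [/eqP h|/eqP h]]]|
                 /existsP [t /andP [ht /orP [/eqP h|/eqP h]]]].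
-
  case: (moveUp hs u v) => j [u' [v' [hj Hu Hv Eu Ev]]].
  have e : u' = v' + r' %[mod p0].
    apply: (@cC _ _ _ (j.+1 * b1)).
    have E1 : u' + j.+1 * b1 = v + r + (s + b1) %[mod p0].
      by rewrite Eu; apply: cD.
    have E2 : v' + r' + j.+1 * b1 = v + r + (s + b1) %[mod p0].
      rewrite (_ : v' + r' + j.+1 * b1 = (v' + j.+1 * b1) + r'); last by rewrite addnAC.
      rewrite -[v + r + _]addnA; apply: cD => //; rewrite h modn_mod //.
    by rewrite E1 E2.
  case: (IH' u' v' e) => k hk Hk; exists (j.+1 + k); first exact: Hbound.
  exact: Meet_pre Hu Hv Hk.
-
  case: (moveUp hs v u) => j [v' [u' [hj Hv Hu Ev Eu]]].
  have e : u' = v' + r' %[mod p0].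
    apply: (@cC _ _ _ (j.+1 * b1)).
    have E1 : u' + j.+1 * b1 = v + r %[mod p0] by rewrite Eu huv.
    have E2 : v' + r' + j.+1 * b1 = v + r %[mod p0].
      rewrite (_ : v' + r' + j.+1 * b1 = v + (r' + (s + b1))); last by apply: hA1.
      by apply: cD.
    by rewrite E1 E2.
  case: (IH' u' v' e) => k hk Hk; exists (j.+1 + k); first exact: Hbound.
  exact: Meet_pre Hu Hv Hk.
-
  case: (moveDn ht v u) => j [v' [u' [hj Hv Hu Ev Eu]]].
  have e : u' = v' + r' %[mod p0].
    apply: (@cC _ _ _ (j.+1 * b1)).
    have E1 : u' + j.+1 * b1 = v + r %[mod p0] by rewrite Eu huv.
    have E2 : v' + r' + j.+1 * b1 = v + r %[mod p0].
      rewrite (_ : v' + r' + j.+1 * b1 = (v' + j.+1 * b1) + r'); last by rewrite addnAC.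
      have -> : v' + j.+1 * b1 + r' = v' + j.+1 * b1 + (r + (t + a1)) %[mod p0].
        by apply: cD => //; rewrite h modn_mod.
      rewrite (_ : v' + j.+1 * b1 + (r + (t + a1)) = (v' + j.+1 * b1 + (t + a1)) + r); last by apply: hA2.
      by apply: cD.
    by rewrite E1 E2.
  case: (IH' u' v' e) => k hk Hk; exists (j.+1 + k); first exact: Hbound.
  exact: Meet_pre Hu Hv Hk.
-
  case: (moveDn ht u v) => j [u' [v' [hj Hu Hv Eu Ev]]].
  have e : u' = v' + r' %[mod p0].
    apply: (@cC _ _ _ (j.+1 * b1 + (t + a1))).
    rewrite [u' + _]addnA Eu huv.
    rewrite (_ : v' + r' + (j.+1 * b1 + (t + a1)) = (v' + j.+1 * b1) + (r' + (t + a1))); last by apply: hA3.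
    by apply: cD.
  case: (IH' u' v' e) => k hk Hk; exists (j.+1 + k); first exact: Hbound.
  exact: Meet_pre Hu Hv Hk.
Qed.

Hypothesis hdST : forall s t : 'I_n, s \in S -> t \in T -> d %| s + t.
Hypothesis hdind : forall P : nat -> Prop, P 0 ->
  (forall a b, P a -> P b -> P (gcdn a b)) ->
  (forall s t : 'I_n, s \in S -> t \in T -> P (s + t)) -> P d.

Lemma hdp0 : d %| p0.
Proof. exact: hdST. Qed.

Lemma p0pos : 0 < p0.
Proof. by rewrite addn_gt0 hpa. Qed.

Lemma step_modd (x z : 'I_n) : A x z -> z + b1 = x %[mod d].
Proof.
case/A_cases => [[s hs ->]|[t ht ->]].
  by rewrite -addnA addnC -(divnK (hdST hs hb1)) modnMDl.
apply/eqP; rewrite eqn_modDl; apply/eqP.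
have h1 := hdST ha1 hb1; have h2 := hdST ha1 ht.
have : a1 + b1 = a1 + t %[mod d].
  by move: h1 h2; rewrite /dvdn => /eqP -> /eqP ->.
by move/eqP; rewrite eqn_modDl => /eqP.
Qed.

Lemma reach_modd k (x y : 'I_n) : bpow A k x y -> y + k * b1 = x %[mod d].
Proof.
elim: k x => [|k IH] x.
  by rewrite bpow0 => /eqP ->; rewrite mul0n addn0.
rewrite bpowS => /existsP [z /andP [Az Hz]].
have e := IH _ Hz; have e' := step_modd Az.
have -> : y + k.+1 * b1 = (y + k * b1) + b1 by rewrite mulSn; lia.
by rewrite -modnDml e modnDml e'.
Qed.

Lemma Meet_modd k u v : Meet A k u v -> u = v %[mod d].
Proof.
case=> w /andP [H1 H2]; by rewrite -(reach_modd H1) -(reach_modd H2).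
Qed.

Definition stableb N := [forall r : 'I_p0, Xp N.+1 r ==> Xp N r].

Lemma stable_all N : stableb N -> forall x, Xp N.+1 x -> Xp N x.
Proof.
move=> /forallP st x hx.
have /implyP := st (Ordinal (ltn_pmod x p0pos)).
by rewrite (Xp_mod N.+1 x) (Xp_mod N x); apply.
Qed.

Lemma closure N : stableb N -> forall x, d %| x -> Xp N x.
Proof.
move=> st.
pose Tr x := forall r, Xp N r -> Xp N (r + x).
have Tr0 : Tr 0 by move=> r; rewrite addn0.
have TrD : forall a b, Tr a -> Tr b -> Tr (a + b).
  by move=> a b ha hb r hr; rewrite addnA; apply: hb; apply: ha.
have TrM : forall a k, Tr a -> Tr (a * k).
  move=> a k ha; elim: k => [|k IH]; first by rewrite muln0.
  by rewrite mulnS; apply: TrD.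
have TrC : forall a k, Tr (a + k * p0) -> Tr a.
  move=> a k ha r hr; rewrite -Xp_mod.
  have -> : (r + a) %% p0 = (r + (a + k * p0)) %% p0.
    by rewrite addnA [_ + k * p0]addnC modnMDl.
  by rewrite Xp_mod; apply: ha.
have TrS : forall s : 'I_n, s \in S -> Tr (s + b1).
  move=> s hs r hr; apply: stable_all => //=; apply/orP; right.
  apply/existsP; exists (Ordinal (ltn_pmod r p0pos)); rewrite /= Xp_mod hr /=.
  apply/orP; left; apply/existsP; exists s; rewrite hs /=.
  by rewrite modnDml eqxx orbT.
have TrT : forall t : 'I_n, t \in T -> Tr (t + a1).
  move=> t ht r hr; apply: stable_all => //=; apply/orP; right.
  apply/existsP; exists (Ordinal (ltn_pmod r p0pos)); rewrite /= Xp_mod hr /=.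
  apply/orP; right; apply/existsP; exists t; rewrite ht /=.
  by rewrite modnDml eqxx orbT.
have TrST : forall s t : 'I_n, s \in S -> t \in T -> Tr (s + t).
  move=> s t hs ht; apply: (TrC _ 1).
  rewrite (_ : s + t + 1 * p0 = (s + b1) + (t + a1)); last by lia.
  by apply: TrD; [apply: TrS | apply: TrT].
have TrG : forall a b, Tr a -> Tr b -> Tr (gcdn a b).
  move=> a b ha hb; case: (posnP a) => [->|a0]; first by rewrite gcd0n.
  case: (Bezoutl b a0) => k _ hdv.
  set q := (gcdn a b + k * b) %/ a.
  have hq : gcdn a b + k * b = a * q by rewrite /q [a * _]mulnC divnK.
  apply: (TrC _ (k * b)).
  have -> : gcdn a b + k * b * p0 = a * q + b * (k * p0.-1).
    rewrite -hq -{1}(prednK p0pos) mulnS -addnA; congr (_ + (_ + _)).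
    by rewrite mulnA [b * k]mulnC.
  by apply: TrD; apply: TrM.
have Trd : Tr d by apply: hdind.
move=> x /divnK <-; rewrite -[_ * d]add0n mulnC.
apply: (TrM _ _ Trd); apply: (Xp_le (N := 0)) => //=; by rewrite mod0n.
Qed.

Lemma dvd_modp x : (d %| x %% p0) = (d %| x).
Proof. by rewrite /dvdn (modn_dvdm x hdp0). Qed.

Lemma Xp_dvd N r : Xp N r -> d %| r.
Proof.
elim: N r => [|N IH] r /=.
  by move/eqP => h; rewrite -dvd_modp h dvdn0.
case/orP => [|/existsP [r' /andP [hr' hmv]]]; first exact: IH.
have dr' := IH _ hr'.
case/orP: hmv => [/existsP [s /andP [hs /orP [/eqP h|/eqP h]]]|
                 /existsP [t /andP [ht /orP [/eqP h|/eqP h]]]].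
- have hg : d %| s + b1 := hdST hs hb1.
  by rewrite -(dvdn_addl r hg) -dvd_modp -h.
- have hg : d %| s + b1 := hdST hs hb1.
  by rewrite -dvd_modp -h dvd_modp dvdn_add.
- have hg : d %| t + a1 by rewrite addnC hdST.
  by rewrite -(dvdn_addl r hg) -dvd_modp -h.
- have hg : d %| t + a1 by rewrite addnC hdST.
  by rewrite -dvd_modp -h dvd_modp dvdn_add.
Qed.

Definition Xset N := [set r : 'I_p0 | Xp N r].
Definition Dset := [set r : 'I_p0 | d %| r].

Lemma Dset_card : #|Dset| <= (p0.-1 %/ d).+1.
Proof.
pose f (r : 'I_p0) : 'I_(p0.-1 %/ d).+1 := inord (r %/ d).
have hle : forall r : 'I_p0, r %/ d <= p0.-1 %/ d.
  move=> r; apply: leq_div2r; rewrite -ltnS prednK ?p0pos //.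
rewrite -(card_in_imset (f := f)); first by rewrite -[X in _ <= X]card_ord max_card.
move=> x y; rewrite !inE => hx hy /(congr1 (@nat_of_ord _)); rewrite /f !inordK ?ltnS ?hle //.
by move=> e; apply: val_inj; rewrite /= -(divnK hx) -(divnK hy) e.
Qed.

Lemma Xset_sub N : Xset N \subset Dset.
Proof. by apply/subsetP => r; rewrite !inE; apply: Xp_dvd. Qed.

Lemma Xset_grow N : ~~ stableb N -> #|Xset N| < #|Xset N.+1|.
Proof.
move=> hn; apply: proper_card; rewrite properE; apply/andP; split.
  by apply/subsetP => r; rewrite !inE; apply: Xp_grow.
apply/subsetP => hs; move/negP: hn; apply; apply/forallP => r; apply/implyP => h.
by have := hs r; rewrite !inE; apply.
Qed.

Lemma stab_exists : exists2 N, N <= p0.-1 %/ d & stableb N.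
Proof.
set M := p0.-1 %/ d.
have claim : forall N, (exists2 N', N' <= N & stableb N') \/ N < #|Xset N|.
  elim => [|N IH].
    right; apply/card_gt0P; exists (Ordinal p0pos); rewrite inE /= mod0n //.
  case: IH => [[N' h1 h2]|h]; first by left; exists N' => //; apply: leqW.
  case hs: (stableb N); first by left; exists N.
  right; apply: leq_trans (Xset_grow _) => //; last by rewrite hs.
case: (claim M) => // h.
case hs: (stableb M); first by exists M.
have h2 := leq_trans (Xset_grow (negbT hs)) (subset_leq_card (Xset_sub M.+1)).
have h1 := Dset_card; rewrite -/M in h1.
have h3 := leq_trans (leq_ltn_trans h h2) h1.
by rewrite ltnn in h3.
Qed.

Lemma full x : d %| x -> Xp (p0.-1 %/ d) x.
Proof.
case: stab_exists => N hN st hx; apply: (Xp_le hN); exact: closure.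
Qed.

Lemma main_meet (u v : 'I_n) : u = v %[mod d] ->
  exists2 k, k <= (p0.-1 %/ d) * R.+1 + n.-1 %/ p0 & Meet A k u v.
Proof.
move=> huv.
set rho := (u + v * p0.-1) %% p0.
have hrho : d %| rho.
  rewrite /rho dvd_modp.
  have e1 : u + v * p0.-1 + v = u + v * p0 by rewrite -addnA -mulnSr prednK ?p0pos.
  have e2 : u + v * p0 = v %[mod d].
    by rewrite -(divnK hdp0) mulnA [u + _]addnC modnMDl huv.
  have : u + v * p0.-1 + v = 0 + v %[mod d] by rewrite e1 e2 add0n.
  by move/eqP; rewrite eqn_modDr mod0n => /eqP; rewrite /dvdn => ->.
apply: (game (full hrho)).
rewrite /rho modnDmr addnCA -mulnS prednK ?p0pos //.
by rewrite [u + _]addnC modnMDl.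
Qed.

End Toep.


Lemma bigmin_le n (X : {set 'I_n}) (s : 'I_n) : s \in X ->
  \big[minn/n]_(x in X) (x : nat) <= s.
Proof.
move=> hs; rewrite unlock; have : s \in index_enum 'I_n by rewrite mem_index_enum.
elim: (index_enum 'I_n) => // h t IH; rewrite inE => /orP [/eqP <-|hst] /=.
  by rewrite hs geq_minl.
by case: ifP => _; [apply: leq_trans (geq_minr _ _) (IH hst) | exact: IH].
Qed.

Lemma bigmin_in n (X : {set 'I_n}) : X != set0 ->
  exists2 a : 'I_n, a \in X & \big[minn/n]_(x in X) (x : nat) = a.
Proof.
move=> hX.
have : (\big[minn/n]_(x in X) (x : nat) == n) ||
       [exists a in X, \big[minn/n]_(x in X) (x : nat) == a].
  apply: (big_ind (fun m => (m == n) || [exists a in X, m == a])) => //.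
  - by rewrite eqxx.
  - move=> x y hx hy; rewrite /minn; case: ifP => _; [exact: hx | exact: hy].
  - by move=> i hi; apply/orP; right; apply/existsP; exists i; rewrite hi eqxx.
case/orP => [/eqP h|/existsP [a /andP [ha /eqP h]]]; last by exists a.
case/set0Pn: hX => s hs; have := bigmin_le hs; rewrite h => h'.
by have := ltn_ord s; rewrite ltnNge h'.
Qed.

Lemma arithB P Y X Q c : P <= Q -> X <= Q -> Y <= X -> P + Y <= 2 * Q + c.
Proof. lia. Qed.

Lemma predD n d : 0 < n -> 0 < d -> n + d.-1 = n.-1 + d.
Proof. lia. Qed.

Theorem theorem3p5 (n : nat) (S T : {set 'I_n})
  (hS0 : S != set0) (hT0 : T != set0)
  (hSpos : forall s : 'I_n, s \in S -> 0 < s)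
  (hTpos : forall t : 'I_n, t \in T -> 0 < t) :
  let s1 := \big[minn/n]_(s in S) (s : nat) in
  let sk := \max_(s in S) (s : nat) in
  let t1 := \big[minn/n]_(t in T) (t : nat) in
  let tk := \max_(t in T) (t : nat) in
  let A := Tmat S T in
  let d := \big[gcdn/0]_(s in S) \big[gcdn/0]_(t in T) ((s : nat) + t) in
  sk + t1 <= n -> s1 + tk <= n ->
  (forall i, 1 <= i <= d ->
     principal_irreducible (bmul A (btr A))
       [set v : 'I_n | v.+1 == i %[mod d]]) ->
  exists q, [/\ 0 < q,
    q <= 2 * (ceil_div n d - 1) * (maxn (ceil_div tk s1) (ceil_div sk t1) + 1)
         + 2 * (s1 + t1)
    & comp_prop A q].
Proof.
move=> s1 sk t1 tk A d hST hTS _.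
case: (bigmin_in hS0) => a1 ha1 ea1.
case: (bigmin_in hT0) => b1 hb1 eb1.
rewrite -/s1 in ea1; rewrite -/t1 in eb1.
have hsk : forall s : 'I_n, s \in S -> s <= sk.
  by move=> s hs; apply: (leq_bigmax_cond (F := fun x : 'I_n => (x : nat))).
have htk : forall t : 'I_n, t \in T -> t <= tk.
  by move=> t ht; apply: (leq_bigmax_cond (F := fun x : 'I_n => (x : nat))).
have hpa : 0 < a1 by apply: hSpos.
have hpb : 0 < b1 by apply: hTpos.
have hSb : forall s : 'I_n, s \in S -> s + b1 <= n.
  move=> s hs; rewrite -eb1; apply: leq_trans hST; rewrite leq_add2r; exact: hsk.
have hTa : forall t : 'I_n, t \in T -> a1 + t <= n.
  move=> t ht; rewrite -ea1; apply: leq_trans hTS; rewrite leq_add2l; exact: htk.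
set R := maxn (ceil_div tk s1) (ceil_div sk t1).
have hRS : forall s : 'I_n, s \in S -> ceil_div s b1 <= R.
  move=> s hs; apply: leq_trans (leq_maxr _ _); rewrite /ceil_div -eb1.
  by apply: leq_div2r; rewrite leq_add2r hsk.
have hRT : forall t : 'I_n, t \in T -> ceil_div t a1 <= R.
  move=> t ht; apply: leq_trans (leq_maxl _ _); rewrite /ceil_div -ea1.
  by apply: leq_div2r; rewrite leq_add2r htk.
have hdST : forall s t : 'I_n, s \in S -> t \in T -> d %| s + t.
  move=> s t hs ht; apply: (biggcdn_inf s) => //.
  by apply: (biggcdn_inf t) => //.
have hdind : forall P : nat -> Prop, P 0 ->
    (forall a b, P a -> P b -> P (gcdn a b)) ->
    (forall s t : 'I_n, s \in S -> t \in T -> P (s + t)) -> P d.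
  move=> P P0 PG PST; apply: big_ind => // s hs.
  by apply: big_ind => // t ht; apply: PST.
have hout := outnb ha1 hb1 hpa hpb hTa.
have hp0 : d %| a1 + b1 by apply: hdST.
have hd0 : 0 < d by apply: dvdn_gt0 hp0; rewrite addn_gt0 hpa.
have hn0 : 0 < n := leq_ltn_trans (leq0n _) (ltn_ord a1).
set X := n.-1 %/ d.
have hceil : ceil_div n d - 1 = X.
  rewrite /ceil_div /X.
  have -> : n + d.-1 = n.-1 + d by apply: predD.
  by rewrite divnDr ?dvdnn // divnn hd0 addn1 subn1.
have hp0n : a1 + b1 <= n.
  by rewrite -ea1; apply: leq_trans hTS; rewrite leq_add2l; exact: htk.
have hM : (a1 + b1).-1 %/ d <= X by apply: leq_div2r; rewrite -!subn1 leq_sub2r.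
have hY : n.-1 %/ (a1 + b1) <= X.
  by apply: leq_div2l => //; apply: dvdn_leq => //; rewrite addn_gt0 hpa.
set B := 2 * (ceil_div n d - 1) * (R + 1) + 2 * (s1 + t1).
have key : forall k (u v : 'I_n), B <= k -> compmat A k u v = (u == v %[mod d]).
  move=> k u v hk; apply/idP/idP.
    move/compmatP => H; apply/eqP; exact: (Meet_modd ha1 hb1 hpa hpb hdST H).
  move/eqP => huv; apply/compmatP.
  case: (main_meet ha1 hb1 hpa hpb hSb hTa hRS hRT hdST hdind huv) => k0 hk0 H.
  apply: (Meet_mono hout _ H); apply: leq_trans hk0 _; apply: leq_trans hk.
  rewrite /B hceil addn1.
  have h1 : (a1 + b1).-1 %/ d * R.+1 <= X * R.+1 by apply: leq_mul.
  have h2 : X <= X * R.+1 by rewrite leq_pmulr.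
  rewrite -mulnA; apply: arithB h1 h2 hY.
exists B; split.
- by rewrite /B addn_gt0 orbC muln_gt0 /= addn_gt0 ea1 hpa.
- by [].
- exists 1 => // i u v; rewrite !key // ?leq_addr // -addnA leq_addr //.
Qed.
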